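(* Fix an integer $d\geq 3$ and $\rho<1$. There exist constants $C,c>0$ and a function $\epsilon(n)\to 0$ as $n\to\infty$ (all depending only on $d,\rho$) such that the following holds for all sufficiently large $n$. Let $G_n$ be a $d$-regular graph on $n$ vertices whose transition matrix has all eigenvalues other than $1$ of absolute value at most $\rho$, let $v\in G_n$, and let $G$ be obtained by adding a new vertex $v'$ and the edge $\{v,v'\}$. Then for every vertex $u\neq v'$ there is a set of vertices $S_u$ with $|S_u|\geq (1-\epsilon(n))n$ such that for every $w\in S_u$ and every integer $t$ with $C\log n\leq t\leq n$, $$\mathbb{P}_u(X_t=w,\ \tau_{v'}\geq t)\geq \frac{c}{n}.$$
   Context: $(X_t)$ is simple random walk on $G$, $\mathbb{P}_u$ its law with $X_0=u$, and $\tau_{v'}=\min\{t\geq1:X_t=v'\}$. *)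

(* Defs.v *)
From Stdlib Require Import Reals Lra Lia List.
Open Scope R_scope.

(* Vertices of G_n are 0, ..., n-1; the new vertex v' of G is n. *)

Fixpoint rsum (n : nat) (f : nat -> R) : R :=
  match n with
  | O => 0
  | S k => rsum k f + f k
  end.

Definition ncount (m : nat) (P : nat -> bool) : nat :=
  length (filter P (seq 0 m)).

Definition is_d_regular_simple (n d : nat) (adj : nat -> nat -> bool) : Prop :=
  (forall x y, (x < n)%nat -> (y < n)%nat -> adj x y = adj y x) /\
  (forall x, (x < n)%nat -> adj x x = false) /\
  (forall x, (x < n)%nat -> ncount n (adj x) = d).

Definition transGn (n d : nat) (adj : nat -> nat -> bool) (x y : nat) : R :=
  if adj x y then / INR d else 0.

Definition mat_apply (n : nat) (P : nat -> nat -> R) (f : nat -> R) (x : nat) : R :=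
  rsum n (fun y => P x y * f y).

(* "All eigenvalues other than 1 have absolute value at most rho":
   the eigenvalue 1 is simple (its eigenspace is the constants) and every
   other eigenvalue lambda satisfies |lambda| <= rho.  The matrix is real
   symmetric, so all eigenvalues are real with real eigenvectors. *)
Definition spectral_gap (n d : nat) (adj : nat -> nat -> bool) (rho : R) : Prop :=
  let P := transGn n d adj in
  (forall f : nat -> R,
      (forall x, (x < n)%nat -> mat_apply n P f x = f x) ->
      forall x y, (x < n)%nat -> (y < n)%nat -> f x = f y) /\
  (forall (lam : R) (f : nat -> R),
      (exists x, (x < n)%nat /\ f x <> 0) ->
      (forall x, (x < n)%nat -> mat_apply n P f x = lam * f x) ->
      lam <> 1 -> Rabs lam <= rho).

Definition adjG (n : nat) (adj : nat -> nat -> bool) (v x y : nat) : bool :=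
  (Nat.ltb x n && Nat.ltb y n && adj x y)
  || (Nat.eqb x v && Nat.eqb y n) || (Nat.eqb x n && Nat.eqb y v).

Definition degG (n : nat) (adj : nat -> nat -> bool) (v x : nat) : nat :=
  ncount (S n) (adjG n adj v x).

Definition transG (n : nat) (adj : nat -> nat -> bool) (v x y : nat) : R :=
  if adjG n adj v x y then / INR (degG n adj v x) else 0.

(* killed (v' = n) walk:
   walk_avoid n adj v u t w = P_u(X_t = w, X_s <> n for all 0 <= s <= t-1).
   For u <> n this is P_u(X_t = w, tau_{v'} >= t), with
   tau_{v'} = min{s >= 1 : X_s = v'}. *)
Fixpoint walk_avoid (n : nat) (adj : nat -> nat -> bool) (v u t w : nat) : R :=
  match t with
  | O => if Nat.eqb w u then 1 else 0
  | S s => rsum n (fun x => walk_avoid n adj v u s x * transG n adj v x w)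
  end.

(* Main.v *)
Require Import Defs.
From Stdlib Require Import Reals Lra Lia List Psatz Classical.
Open Scope R_scope.

Lemma rsum_ext : forall n f g, (forall i, (i < n)%nat -> f i = g i) -> rsum n f = rsum n g.
Proof. induction n; intros f g H; simpl; auto. rewrite (IHn f g) by (intros; apply H; lia). rewrite (H n) by lia. reflexivity. Qed.

Lemma rsum_plus : forall n f g, rsum n (fun i => f i + g i) = rsum n f + rsum n g.
Proof. induction n; intros; simpl; [lra| rewrite IHn; lra]. Qed.

Lemma rsum_minus : forall n f g, rsum n (fun i => f i - g i) = rsum n f - rsum n g.
Proof. induction n; intros; simpl; [lra| rewrite IHn; lra]. Qed.

Lemma rsum_scal_l : forall n c f, rsum n (fun i => c * f i) = c * rsum n f.
Proof. induction n; intros; simpl; [lra| rewrite IHn; lra]. Qed.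

Lemma rsum_scal_r : forall n c f, rsum n (fun i => f i * c) = rsum n f * c.
Proof. induction n; intros; simpl; [lra| rewrite IHn; lra]. Qed.

Lemma rsum_zero : forall n, rsum n (fun _ => 0) = 0.
Proof. induction n; simpl; [lra| rewrite IHn; lra]. Qed.

Lemma rsum_const : forall n c, rsum n (fun _ => c) = INR n * c.
Proof. induction n; intros; cbn [rsum]. simpl; lra. rewrite IHn, S_INR. lra. Qed.

Lemma rsum_le : forall n f g, (forall i, (i < n)%nat -> f i <= g i) -> rsum n f <= rsum n g.
Proof. induction n; intros f g H; simpl; [lra|]. assert (rsum n f <= rsum n g) by (apply IHn; intros; apply H; lia).
 assert (f n <= g n) by (apply H; lia). lra. Qed.

Lemma rsum_nonneg : forall n f, (forall i, (i < n)%nat -> 0 <= f i) -> 0 <= rsum n f.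
Proof. intros. rewrite <- (rsum_zero n). apply rsum_le. auto. Qed.

Lemma rsum_swap : forall n m (f : nat -> nat -> R),
  rsum n (fun i => rsum m (fun j => f i j)) = rsum m (fun j => rsum n (fun i => f i j)).
Proof. induction n; intros; simpl. rewrite rsum_zero; auto.
 rewrite IHn. rewrite <- rsum_plus. reflexivity. Qed.

Lemma rsum_ind : forall n i g, (i < n)%nat -> rsum n (fun j => if Nat.eqb j i then g j else 0) = g i.
Proof. induction n; intros i g H; [lia|]. simpl. destruct (Nat.eq_dec i n).
 - subst. rewrite Nat.eqb_refl. rewrite (rsum_ext n _ (fun _ => 0)). rewrite rsum_zero; lra.
   intros. destruct (Nat.eqb_spec i n); [lia|auto].
 - rewrite IHn by lia. destruct (Nat.eqb_spec n i); [lia|]. lra. Qed.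

Lemma rsum_ind' : forall n i g, (i < n)%nat -> rsum n (fun j => if Nat.eqb i j then g j else 0) = g i.
Proof. intros. rewrite <- (rsum_ind n i g H). apply rsum_ext. intros. rewrite Nat.eqb_sym. auto. Qed.

Lemma rsum_le_term : forall n f i, (forall j, (j < n)%nat -> 0 <= f j) -> (i < n)%nat -> f i <= rsum n f.
Proof. induction n; intros f i H Hi; [lia|]. simpl. destruct (Nat.eq_dec i n).
 - subst. assert (0 <= rsum n f) by (apply rsum_nonneg; intros; apply H; lia). lra.
 - assert (f i <= rsum n f) by (apply IHn; [intros; apply H; lia| lia]). assert (0 <= f n) by (apply H; lia). lra. Qed.

Lemma ncount_S : forall n p, ncount (S n) p = (ncount n p + (if p n then 1 else 0))%nat.
Proof. intros. unfold ncount. rewrite seq_S, filter_app, length_app. simpl. destruct (p n); simpl; lia. Qed.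

Lemma ncount_ext : forall n p q, (forall i, (i < n)%nat -> p i = q i) -> ncount n p = ncount n q.
Proof. induction n; intros p q H; auto. rewrite !ncount_S. rewrite (IHn p q) by (intros; apply H; lia). rewrite (H n) by lia. auto. Qed.

Lemma ncount_true : forall n, ncount n (fun _ => true) = n.
Proof. induction n; auto. rewrite ncount_S, IHn. lia. Qed.

Lemma rsum_if : forall n (p : nat -> bool) c, rsum n (fun y => if p y then c else 0) = INR (ncount n p) * c.
Proof. induction n; intros; cbn [rsum]. unfold ncount; simpl; lra.
 rewrite IHn, ncount_S, plus_INR. destruct (p n); cbn [INR]; lra. Qed.

Lemma wcs : forall n p a b, (forall i, (i < n)%nat -> 0 <= p i) ->
  (rsum n (fun i => p i * a i * b i))^2 <= rsum n (fun i => p i * a i * a i) * rsum n (fun i => p i * b i * b i).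
Proof. induction n; intros p a b Hp; simpl. lra.
 assert (IH := IHn p a b (fun i Hi => Hp i (Nat.lt_lt_succ_r _ _ Hi))).
 set (S0 := rsum n (fun i => p i * a i * b i)) in *.
 set (A := rsum n (fun i => p i * a i * a i)) in *.
 set (B := rsum n (fun i => p i * b i * b i)) in *.
 assert (HA : 0 <= A) by (apply rsum_nonneg; intros; assert (0 <= p i) by (apply Hp; lia); nra).
 assert (HB : 0 <= B) by (apply rsum_nonneg; intros; assert (0 <= p i) by (apply Hp; lia); nra).
 assert (Hpn : 0 <= p n) by (apply Hp; lia).
 assert (K: 2 * S0 * (p n * a n * b n) <= A * (p n * b n * b n) + B * (p n * a n * a n)).
 { assert (H1 : 0 <= A * (b n * b n) + B * (a n * a n)) by nra.
   assert (H2 : (2 * S0 * (a n * b n))^2 <= (A * (b n * b n) + B * (a n * a n))^2).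
   { assert (0 <= (A * (b n * b n) - B * (a n * a n))^2) by apply pow2_ge_0.
     assert (S0^2 * (a n*b n)^2 <= A*B*(a n * b n)^2) by (apply Rmult_le_compat_r; nra).
     replace ((2 * S0 * (a n * b n))^2) with (4 * (S0^2 * (a n*b n)^2)) by ring.
     replace ((A * (b n * b n) + B * (a n * a n))^2) with ((A * (b n * b n) - B * (a n * a n))^2 + 4 * (A*B*(a n * b n)^2)) by ring.
     lra. }
   assert (2 * S0 * (a n * b n) <= A * (b n * b n) + B * (a n * a n)).
   { destruct (Rle_dec (2 * S0 * (a n * b n)) 0). lra.
     apply Rsqr_incr_0_var; unfold Rsqr; nra. }
   nra. }
 nra.
Qed.

Definition form (k : nat) (Q : nat -> nat -> R) (f : nat -> R) : R :=
  rsum k (fun i => f i * rsum k (fun j => Q i j * f j)).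
Definition sq (k : nat) (f : nat -> R) : R := rsum k (fun i => f i * f i).

Lemma sq_nonneg : forall k f, 0 <= sq k f.
Proof. intros; apply rsum_nonneg; intros; nra. Qed.

Lemma form_ind : forall k Q i, (i < k)%nat -> form k Q (fun j => if Nat.eqb j i then 1 else 0) = Q i i.
Proof. intros. unfold form.
 rewrite (rsum_ext k _ (fun x => if Nat.eqb x i then Q x i else 0)).
 apply (rsum_ind k i (fun j => Q j i)); auto.
 intros x Hx. rewrite (rsum_ext k _ (fun y => if Nat.eqb y i then Q x y else 0)).
 rewrite rsum_ind by auto. destruct (Nat.eqb x i); lra.
 intros y Hy. destruct (Nat.eqb y i); lra. Qed.

Lemma form_S : forall k Q f, (forall i j, (i < S k)%nat -> (j < S k)%nat -> Q i j = Q j i) ->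
  form (S k) Q f = form k Q f + 2 * f k * rsum k (fun j => Q k j * f j) + Q k k * f k * f k.
Proof. intros k Q f HS. unfold form. cbn [rsum].
 rewrite (rsum_ext k (fun i => f i * (rsum k (fun j => Q i j * f j) + Q i k * f k))
   (fun i => f i * rsum k (fun j => Q i j * f j) + f k * (Q k i * f i))).
 rewrite rsum_plus, rsum_scal_l. ring.
 intros. rewrite (HS i k) by lia. ring. Qed.

Lemma form_zero_ext : forall k Q f g, (forall i, (i < k)%nat -> f i = g i) -> form k Q f = form k Q g.
Proof. intros. unfold form. apply rsum_ext. intros. rewrite H by auto. f_equal. apply rsum_ext. intros. rewrite H; auto. Qed.

Lemma sq_ext : forall k f g, (forall i, (i < k)%nat -> f i = g i) -> sq k f = sq k g.
Proof. intros. unfold sq. apply rsum_ext. intros. rewrite H; auto. Qed.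

Lemma dich : forall k Q, (forall i j, (i < k)%nat -> (j < k)%nat -> Q i j = Q j i) ->
  (forall f, 0 <= form k Q f) ->
  (exists f, (exists i, (i < k)%nat /\ f i <> 0) /\ forall i, (i < k)%nat -> rsum k (fun j => Q i j * f j) = 0)
  \/ (exists delta, 0 < delta /\ forall f, delta * sq k f <= form k Q f).
Proof.
 induction k; intros Q HS HP.
 - right. exists 1. split. lra. intros. unfold sq, form. simpl. lra.
 - set (a := Q k k).
   assert (Ha : 0 <= a). { unfold a. rewrite <- (form_ind (S k) Q k) by lia. apply HP. }
   destruct (Req_dec a 0) as [Ha0 | Ha0].
   + (* kernel vector e_k *)
     assert (Hz : forall i, (i < k)%nat -> Q k i = 0).
     { intros i Hi. destruct (Req_dec (Q k i) 0); auto. exfalso.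
       set (t := - (Q i i + 1) / (2 * Q k i)).
       set (f := fun j => if Nat.eqb j k then t else if Nat.eqb j i then 1 else 0).
       assert (H1 := HP f). rewrite form_S in H1 by auto.
       rewrite (form_zero_ext k Q f (fun j => if Nat.eqb j i then 1 else 0)) in H1.
       rewrite form_ind in H1 by auto.
       rewrite (rsum_ext k (fun j => Q k j * f j) (fun j => if Nat.eqb j i then Q k j else 0)) in H1.
       rewrite rsum_ind in H1 by auto.
       unfold f in H1. rewrite Nat.eqb_refl in H1. fold a in H1. rewrite Ha0 in H1.
       assert (E2 : 2 * t * Q k i = -(Q i i + 1)) by (unfold t; field; auto).
       nra.
       intros j Hj. unfold f. destruct (Nat.eqb_spec j k); [lia|]. destruct (Nat.eqb j i); lra.
       intros j Hj. unfold f. destruct (Nat.eqb_spec j k); [lia|]. auto. }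
     left. exists (fun j => if Nat.eqb j k then 1 else 0). split.
     * exists k. split. lia. rewrite Nat.eqb_refl. lra.
     * intros i Hi. rewrite (rsum_ext (S k) _ (fun j => if Nat.eqb j k then Q i j else 0)).
       rewrite rsum_ind by lia. destruct (Nat.eq_dec i k). subst. auto.
       rewrite HS by lia. apply Hz. lia.
       intros j Hj. destruct (Nat.eqb j k); lra.
   + assert (Hapos : 0 < a) by lra.
     set (Sm := fun i j => Q i j - Q i k * Q k j / a).
     set (beta := fun f => rsum k (fun j => Q k j * f j)).
     assert (Hid : forall f, form (S k) Q f = form k Sm f + a * (f k + beta f / a)^2).
     { intros f. rewrite form_S by auto. unfold form, Sm, beta.
       rewrite (rsum_ext k (fun i => f i * rsum k (fun j => (Q i j - Q i k * Q k j / a) * f j))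
          (fun i => f i * rsum k (fun j => Q i j * f j) - (rsum k (fun j => Q k j * f j) / a) * (Q k i * f i))).
       rewrite rsum_minus, rsum_scal_l. fold a. field. auto.
       intros i Hi. rewrite (rsum_ext k _ (fun j => Q i j * f j - (Q i k / a) * (Q k j * f j))).
       rewrite rsum_minus, rsum_scal_l. rewrite (HS i k) by lia. field. auto.
       intros. field. auto. }
     assert (HSs : forall i j, (i < k)%nat -> (j < k)%nat -> Sm i j = Sm j i).
     { intros. unfold Sm. rewrite (HS i j), (HS i k), (HS j k) by lia. field. auto. }
     set (ext := fun y : nat -> R => fun j => if Nat.eqb j k then - (beta y) / a else y j).
     assert (Hext : forall y i, (i < k)%nat -> ext y i = y i).
     { intros. unfold ext. destruct (Nat.eqb_spec i k); [lia|auto]. }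
     assert (Hbeta : forall y, beta (ext y) = beta y).
     { intros. unfold beta. apply rsum_ext. intros. rewrite Hext; auto. }
     assert (HSP : forall y, 0 <= form k Sm y).
     { intros y. assert (H1 := HP (ext y)). rewrite Hid in H1.
       rewrite (form_zero_ext k Sm (ext y) y) in H1 by auto. rewrite Hbeta in H1.
       unfold ext in H1. rewrite Nat.eqb_refl in H1.
       replace (- beta y / a + beta y / a) with 0 in H1 by (field; auto). nra. }
     destruct (IHk Sm HSs HSP) as [[y [[i0 [Hi0 Hy0]] Hker]] | [dl [Hdl Hdom]]].
     * left. exists (ext y). split. exists i0. split. lia. rewrite Hext; auto.
       intros i Hi. cbn [rsum]. unfold ext at 2. rewrite Nat.eqb_refl.
       rewrite (rsum_ext k (fun j => Q i j * ext y j) (fun j => Q i j * y j)) by (intros; rewrite Hext; auto).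
       destruct (Nat.eq_dec i k).
       -- subst. fold (beta y). fold a. field. auto.
       -- assert (Hi' : (i < k)%nat) by lia. assert (Hk := Hker i Hi').
          unfold Sm in Hk. rewrite (rsum_ext k _ (fun j => Q i j * y j - (Q i k / a) * (Q k j * y j))) in Hk.
          rewrite rsum_minus, rsum_scal_l in Hk. fold (beta y) in Hk.
          rewrite <- Hk. field. auto.
          intros. field. auto.
     * right. set (Bq := rsum k (fun j => Q k j * Q k j)).
       assert (HBq : 0 <= Bq) by (apply rsum_nonneg; intros; nra).
       set (K := 1 + 2 * Bq / (a * a)).
       assert (HK : 1 <= K). { unfold K. assert (0 <= Bq / (a*a)) by (unfold Rdiv; apply Rmult_le_pos; [lra| left; apply Rinv_0_lt_compat; nra]). lra. }
       exists (Rmin (dl / K) (a / 2)). split.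
       { apply Rmin_glb_lt. apply Rdiv_lt_0_compat; lra. lra. }
       intros f. rewrite Hid. assert (Hd := Hdom f).
       assert (Hcs : (beta f)^2 <= Bq * sq k f).
       { unfold beta, Bq, sq. assert (W := wcs k (fun _ => 1) (fun j => Q k j) f). cbv beta in W.
         rewrite (rsum_ext k (fun i => 1 * Q k i * f i) (fun j => Q k j * f j)) in W by (intros; ring).
         rewrite (rsum_ext k (fun i => 1 * Q k i * Q k i) (fun j => Q k j * Q k j)) in W by (intros; ring).
         rewrite (rsum_ext k (fun i => 1 * f i * f i) (fun j => f j * f j)) in W by (intros; ring).
         apply W. intros; lra. }
       assert (Hsq : sq (S k) f = sq k f + f k * f k) by (unfold sq; reflexivity).
       rewrite Hsq. set (u := f k + beta f / a). set (s := sq k f).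
       assert (Hs : 0 <= s) by apply sq_nonneg.
       assert (Hfk : f k = u - beta f / a) by (unfold u; ring).
       set (b := beta f / a) in *.
       assert (Hfk2 : f k * f k <= 2 * u * u + 2 * (b * b)).
       { assert (0 <= (u + b) * (u + b)) by apply Rle_0_sqr. rewrite Hfk.
         replace (2 * u * u + 2 * (b * b)) with ((u - b) * (u - b) + (u + b) * (u + b)) by ring. lra. }
       assert (Hb2 : 2 * (b * b) <= 2 * Bq / (a*a) * s).
       { assert (E : b * b = (beta f)^2 * / (a * a)) by (unfold b; field; auto).
         rewrite E. assert (0 < / (a*a)) by (apply Rinv_0_lt_compat; nra).
         unfold Rdiv. unfold s. nra. }
       assert (Hm1 : Rmin (dl / K) (a / 2) <= dl / K) by apply Rmin_l.
       assert (Hm2 : Rmin (dl / K) (a / 2) <= a / 2) by apply Rmin_r.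
       assert (Hm0 : 0 < Rmin (dl / K) (a / 2)) by (apply Rmin_glb_lt; [apply Rdiv_lt_0_compat|]; lra).
       set (m := Rmin (dl / K) (a / 2)) in *.
       assert (HmK : m * K <= dl). { apply (Rmult_le_compat_r K) in Hm1; [|lra]. unfold Rdiv in Hm1.
          rewrite Rmult_assoc, Rinv_l in Hm1 by lra. lra. }
       assert (Hsk : s + f k * f k <= K * s + 2 * u * u) by (unfold K; lra).
       assert (m * (s + f k * f k) <= m * (K * s + 2 * u * u)) by (apply Rmult_le_compat_l; lra).
       assert (Huu : 0 <= u * u) by apply Rle_0_sqr.
       assert (P1 : m * K * s <= dl * s) by (apply Rmult_le_compat_r; lra).
       assert (P2 : 2 * m * (u * u) <= a * (u * u)) by (apply Rmult_le_compat_r; lra).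
       replace (a * u ^ 2) with (a * (u * u)) by ring.
       assert (Hd' : dl * s <= form k Sm f) by exact Hd.
       replace (m * (K * s + 2 * u * u)) with (m * K * s + 2 * m * (u * u)) in H by ring.
       lra.
Qed.


Lemma P_nonneg : forall n d adj x y, (0 < d)%nat -> 0 <= transGn n d adj x y.
Proof. intros. unfold transGn. destruct (adj x y); [|lra]. left. apply Rinv_0_lt_compat. apply lt_0_INR. auto. Qed.

Lemma P_sym : forall n d adj x y, is_d_regular_simple n d adj -> (x < n)%nat -> (y < n)%nat ->
  transGn n d adj x y = transGn n d adj y x.
Proof. intros n d adj x y [H _] Hx Hy. unfold transGn. rewrite H; auto. Qed.

Lemma P_row : forall n d adj x, (0 < d)%nat -> is_d_regular_simple n d adj -> (x < n)%nat ->
  rsum n (fun y => transGn n d adj x y) = 1.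
Proof. intros n d adj x Hd [_ [_ H]] Hx. unfold transGn. rewrite rsum_if. rewrite H by auto.
 field. apply not_0_INR. lia. Qed.

Lemma P_col : forall n d adj y, (0 < d)%nat -> is_d_regular_simple n d adj -> (y < n)%nat ->
  rsum n (fun x => transGn n d adj x y) = 1.
Proof. intros. rewrite <- (P_row n d adj y) by auto. apply rsum_ext. intros. apply P_sym; auto. Qed.

Lemma Psum : forall n d adj f, (0 < d)%nat -> is_d_regular_simple n d adj ->
  rsum n (fun x => mat_apply n (transGn n d adj) f x) = rsum n f.
Proof. intros. unfold mat_apply. rewrite rsum_swap.
 apply rsum_ext. intros y Hy. rewrite rsum_scal_r. rewrite P_col by auto. ring. Qed.

Lemma selfadj : forall n d adj f g, is_d_regular_simple n d adj ->
  rsum n (fun x => f x * mat_apply n (transGn n d adj) g x) = rsum n (fun x => mat_apply n (transGn n d adj) f x * g x).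
Proof. intros. unfold mat_apply.
 rewrite (rsum_ext n (fun x => f x * rsum n (fun y => transGn n d adj x y * g y)) (fun x => rsum n (fun y => f x * transGn n d adj x y * g y))).
 rewrite rsum_swap. apply rsum_ext. intros y Hy. rewrite <- rsum_scal_r. apply rsum_ext. intros x Hx.
 rewrite (P_sym n d adj x y) by auto. ring.
 intros. rewrite <- rsum_scal_l. apply rsum_ext. intros. ring. Qed.

Lemma Pcontr1 : forall n d adj f, (0 < d)%nat -> is_d_regular_simple n d adj ->
  sq n (mat_apply n (transGn n d adj) f) <= sq n f.
Proof. intros. unfold sq.
 apply Rle_trans with (rsum n (fun x => rsum n (fun y => transGn n d adj x y * f y * f y))).
 - apply rsum_le. intros x Hx. unfold mat_apply.
   assert (W := wcs n (fun y => transGn n d adj x y) (fun _ => 1) f). cbv beta in W.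
   rewrite (rsum_ext n (fun i => transGn n d adj x i * 1 * f i) (fun y => transGn n d adj x y * f y)) in W by (intros; ring).
   rewrite (rsum_ext n (fun i => transGn n d adj x i * 1 * 1) (fun y => transGn n d adj x y)) in W by (intros; ring).
   rewrite P_row in W by auto. simpl in W. rewrite Rmult_1_r in W. rewrite Rmult_1_l in W. apply W.
   intros; apply P_nonneg; auto.
 - rewrite rsum_swap. apply Req_le. apply rsum_ext. intros y Hy.
   rewrite (rsum_ext n _ (fun x => transGn n d adj x y * (f y * f y))) by (intros; ring).
   rewrite rsum_scal_r. rewrite P_col by auto. ring. Qed.

Definition Tm (n d : nat) adj (x y : nat) : R :=
  rsum n (fun z => transGn n d adj x z * transGn n d adj z y) - / INR n.

Lemma T_row : forall n d adj f x,
  rsum n (fun y => Tm n d adj x y * f y) =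
  mat_apply n (transGn n d adj) (mat_apply n (transGn n d adj) f) x - rsum n f / INR n.
Proof. intros. unfold Tm, mat_apply.
 rewrite (rsum_ext n _ (fun y => rsum n (fun z => transGn n d adj x z * transGn n d adj z y * f y) - / INR n * f y)).
 rewrite rsum_minus, rsum_swap, rsum_scal_l. unfold Rdiv. rewrite Rmult_comm. f_equal.
 apply rsum_ext. intros z Hz. rewrite <- rsum_scal_l. apply rsum_ext. intros. ring.
 intros y Hy. rewrite rsum_scal_r. ring. Qed.

Lemma T_form : forall n d adj f, is_d_regular_simple n d adj ->
  form n (Tm n d adj) f = sq n (mat_apply n (transGn n d adj) f) - (rsum n f)^2 / INR n.
Proof. intros. unfold form. rewrite (rsum_ext n _ (fun x => f x * mat_apply n (transGn n d adj) (mat_apply n (transGn n d adj) f) x - (rsum n f / INR n) * f x)).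
 rewrite rsum_minus, rsum_scal_l. rewrite selfadj by auto. unfold sq. unfold Rdiv. ring.
 intros. rewrite T_row. ring. Qed.

Lemma T_sym : forall n d adj x y, is_d_regular_simple n d adj -> (x < n)%nat -> (y < n)%nat ->
  Tm n d adj x y = Tm n d adj y x.
Proof. intros. unfold Tm. f_equal. apply rsum_ext. intros z Hz. rewrite (P_sym n d adj x z), (P_sym n d adj z y) by auto. ring. Qed.

Lemma sq_zero_all : forall n f, sq n f = 0 -> forall x, (x < n)%nat -> f x = 0.
Proof. intros n f H x Hx. assert (f x * f x <= sq n f) by (apply (rsum_le_term n (fun i => f i * f i)); auto; intros; nra). 
 assert (0 <= f x * f x) by nra. nra. Qed.

Lemma mat_apply_ext : forall n P f g x, (forall y, (y < n)%nat -> f y = g y) -> mat_apply n P f x = mat_apply n P g x.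
Proof. intros. unfold mat_apply. apply rsum_ext. intros. rewrite H; auto. Qed.

Lemma contraction : forall n d adj rho, (1 <= n)%nat -> (0 < d)%nat -> is_d_regular_simple n d adj ->
  spectral_gap n d adj rho -> 0 <= rho ->
  forall f, rsum n f = 0 -> sq n (mat_apply n (transGn n d adj) f) <= rho^2 * sq n f.
Proof.
 intros n d adj rho Hn Hd Hreg [Hc1 Hc2] Hrho.
 set (P := transGn n d adj) in *.
 set (T := Tm n d adj).
 set (E := fun mu => exists f, 0 < sq n f /\ mu * sq n f <= form n T f).
 assert (HTle : forall f, form n T f <= sq n f).
 { intros. unfold T. rewrite T_form by auto. assert (0 <= (rsum n f)^2 / INR n).
   { unfold Rdiv. apply Rmult_le_pos. apply pow2_ge_0. left. apply Rinv_0_lt_compat. apply lt_0_INR; lia. }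
   assert (Hc := Pcontr1 n d adj f Hd Hreg). change (transGn n d adj) with P in Hc |- *. lra. }
 assert (Hbound : bound E).
 { exists 1. intros mu [f [Hf Hmu]]. assert (Ht := HTle f).
   destruct (Rle_dec mu 1); auto. exfalso. nra. }
 assert (Hne : exists mu, E mu).
 { exists (T 0%nat 0%nat). exists (fun j => if Nat.eqb j 0 then 1 else 0). split.
   - unfold sq. rewrite (rsum_ext n _ (fun j => if Nat.eqb j 0 then 1 else 0)).
     rewrite (rsum_ind n 0 (fun _ => 1)) by lia. lra.
     intros. destruct (Nat.eqb i 0); lra.
   - rewrite form_ind by lia. unfold sq. rewrite (rsum_ext n _ (fun j => if Nat.eqb j 0 then 1 else 0)).
     rewrite (rsum_ind n 0 (fun _ => 1)) by lia. lra.
     intros. destruct (Nat.eqb i 0); lra. }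
 destruct (completeness E Hbound Hne) as [M [HMub HMlub]].
 assert (HTM : forall f, form n T f <= M * sq n f).
 { intros f. destruct (Rle_lt_or_eq_dec 0 (sq n f) (sq_nonneg n f)) as [Hp | Hz].
   - assert (E (form n T f / sq n f)). { exists f. split; auto. unfold Rdiv. rewrite Rmult_assoc, Rinv_l; lra. }
     assert (HH := HMub _ H). apply (Rmult_le_compat_r (sq n f)) in HH; [|lra].
     unfold Rdiv in HH. rewrite Rmult_assoc, Rinv_l in HH; lra.
   - rewrite <- Hz. assert (Ht := HTle f). lra. }
 assert (Hgoal : M <= rho^2 -> forall f, rsum n f = 0 -> sq n (mat_apply n P f) <= rho^2 * sq n f).
 { intros HM f Hf. assert (Ht := HTM f). unfold T in Ht. rewrite T_form in Ht by auto. change (transGn n d adj) with P in Ht.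
   rewrite Hf in Ht. assert (0 <= sq n f) by apply sq_nonneg.
   assert (M * sq n f <= rho^2 * sq n f) by (apply Rmult_le_compat_r; auto).
   replace (0 ^ 2 / INR n) with 0 in Ht by (unfold Rdiv; ring). lra. }
 apply Hgoal.
 destruct (Rle_dec M (rho^2)) as [Hle | Hgt]; auto. exfalso.
 assert (HMpos : 0 < M) by (assert (0 <= rho^2) by apply pow2_ge_0; lra).
 set (Q := fun x y => (if Nat.eqb x y then M else 0) - T x y).
 assert (HQrow : forall f x, (x < n)%nat -> rsum n (fun y => Q x y * f y) = M * f x - rsum n (fun y => T x y * f y)).
 { intros f x Hx. unfold Q. rewrite (rsum_ext n _ (fun y => (if Nat.eqb x y then M * f y else 0) - T x y * f y)).
   rewrite rsum_minus. rewrite (rsum_ind' n x (fun y => M * f y)) by auto. reflexivity.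
   intros. destruct (Nat.eqb x i); ring. }
 assert (HQform : forall f, form n Q f = M * sq n f - form n T f).
 { intros. unfold form. rewrite (rsum_ext n _ (fun x => M * (f x * f x) - f x * rsum n (fun y => T x y * f y))).
   rewrite rsum_minus, rsum_scal_l. reflexivity.
   intros. rewrite HQrow by auto. ring. }
 assert (HQsym : forall x y, (x < n)%nat -> (y < n)%nat -> Q x y = Q y x).
 { intros. unfold Q. rewrite Nat.eqb_sym. unfold T. rewrite T_sym by auto. reflexivity. }
 assert (HQpsd : forall f, 0 <= form n Q f) by (intros; rewrite HQform; assert (H0 := HTM f); lra).
 destruct (dich n Q HQsym HQpsd) as [[f [[i0 [Hi0 Hfi0]] Hker]] | [dl [Hdl Hdom]]].
 2: { assert (HUB : is_upper_bound E (M - dl)).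
      { intros mu [f [Hf Hmu]]. assert (H1 := Hdom f). rewrite HQform in H1.
        assert (mu * sq n f <= (M - dl) * sq n f) by lra.
        apply (Rmult_le_reg_r (sq n f)); auto. }
      assert (HH := HMlub _ HUB). lra. }
 assert (Heig : forall x, (x < n)%nat -> mat_apply n P (mat_apply n P f) x - rsum n f / INR n = M * f x).
 { intros x Hx. assert (H1 := Hker x Hx). rewrite HQrow in H1 by auto. unfold T in H1. rewrite T_row in H1. change (transGn n d adj) with P in H1. lra. }
 assert (Hsum0 : rsum n f = 0).
 { assert (H1 : rsum n (fun x => mat_apply n P (mat_apply n P f) x - rsum n f / INR n) = rsum n (fun x => M * f x))
     by (apply rsum_ext; auto).
   rewrite rsum_minus, rsum_scal_l, rsum_const in H1. unfold P in H1. rewrite !Psum in H1 by auto.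
   assert (INR n * (rsum n f / INR n) = rsum n f) by (field; apply not_0_INR; lia).
   assert (HM0 : M * rsum n f = 0) by lra.
   apply Rmult_integral in HM0. destruct HM0; lra. }
 assert (Heig2 : forall x, (x < n)%nat -> mat_apply n P (mat_apply n P f) x = M * f x).
 { intros x Hx. rewrite <- Heig by auto. rewrite Hsum0. unfold Rdiv. ring. }
 set (mu := sqrt M).
 assert (Hmu2 : mu * mu = M) by (apply sqrt_sqrt; lra).
 assert (Hmupos : 0 < mu) by (apply sqrt_lt_R0; lra).
 assert (Hmurho : rho < mu).
 { unfold mu. rewrite <- (sqrt_pow2 rho) by auto. apply sqrt_lt_1; try lra. apply pow2_ge_0. }
 set (g := fun x => mat_apply n P f x + mu * f x).
 assert (Hg : forall x, (x < n)%nat -> mat_apply n P g x = mu * g x).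
 { intros x Hx. unfold g. unfold mat_apply at 1.
   rewrite (rsum_ext n _ (fun y => P x y * mat_apply n P f y + mu * (P x y * f y))) by (intros; ring).
   rewrite rsum_plus, rsum_scal_l. fold (mat_apply n P (mat_apply n P f) x). fold (mat_apply n P f x).
   rewrite Heig2 by auto. rewrite <- Hmu2. ring. }
 destruct (classic (exists x, (x < n)%nat /\ g x <> 0)) as [Hgnz | Hgz].
 - destruct (Req_dec mu 1) as [Hm1 | Hm1].
   + assert (Hconst := Hc1 g). change (transGn n d adj) with P in Hconst.
     assert (Hc : forall x y, (x < n)%nat -> (y < n)%nat -> g x = g y).
     { apply Hconst. intros. rewrite Hg by auto. rewrite Hm1. ring. }
     assert (Hgs : rsum n g = 0).
     { unfold g. rewrite rsum_plus, rsum_scal_l. unfold P. rewrite Psum by auto. rewrite Hsum0. ring. }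
     rewrite (rsum_ext n g (fun _ => g 0%nat)) in Hgs by (intros; apply Hc; lia).
     rewrite rsum_const in Hgs. destruct Hgnz as [x [Hx Hgx]].
     rewrite (Hc x 0%nat) in Hgx by lia.
     apply Rmult_integral in Hgs. destruct Hgs as [Hgs | Hgs]; [|lra].
     apply (not_0_INR n); [lia|auto].
   + assert (Habs := Hc2 mu g Hgnz Hg Hm1). rewrite Rabs_right in Habs by lra. lra.
 - assert (Hf : forall x, (x < n)%nat -> mat_apply n P f x = (- mu) * f x).
   { intros x Hx. destruct (Req_dec (g x) 0) as [Hz|Hz]. unfold g in Hz. lra.
     exfalso. apply Hgz. exists x. auto. }
   assert (Habs := Hc2 (- mu) f (ex_intro _ i0 (conj Hi0 Hfi0)) Hf ltac:(lra)).
   rewrite Rabs_left in Habs by lra. lra.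
Qed.

Fixpoint pw (n : nat) (P : nat -> nat -> R) (u t w : nat) : R :=
  match t with
  | O => if Nat.eqb w u then 1 else 0
  | S s => rsum n (fun x => P x w * pw n P u s x)
  end.

Lemma pw_nonneg : forall n P u t w, (forall x y, 0 <= P x y) -> 0 <= pw n P u t w.
Proof. induction t; intros; simpl. destruct (Nat.eqb w u); lra.
 apply rsum_nonneg. intros. apply Rmult_le_pos; auto. Qed.

Lemma pw_sum : forall n d adj u t, (0 < d)%nat -> is_d_regular_simple n d adj -> (u < n)%nat ->
  rsum n (pw n (transGn n d adj) u t) = 1.
Proof. induction t; intros Hd Hreg Hu; simpl.
 - rewrite (rsum_ind n u (fun _ => 1)); auto.
 - rewrite rsum_swap. transitivity (rsum n (pw n (transGn n d adj) u t)); [|apply IHt; auto]. apply rsum_ext. intros x Hx.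
   rewrite rsum_scal_r. rewrite P_row by auto. ring. Qed.

Lemma mixing : forall n d adj rho u, (1 <= n)%nat -> (0 < d)%nat -> is_d_regular_simple n d adj ->
  spectral_gap n d adj rho -> 0 <= rho -> (u < n)%nat ->
  forall t w, (w < n)%nat -> Rabs (pw n (transGn n d adj) u t w - / INR n) <= rho ^ t.
Proof.
 intros n d adj rho u Hn Hd Hreg Hsg Hrho Hu.
 set (P := transGn n d adj).
 set (f := fun t w => pw n P u t w - / INR n).
 assert (HnR : INR n <> 0) by (apply not_0_INR; lia).
 assert (Hf0 : forall t, rsum n (f t) = 0).
 { intros. unfold f. rewrite rsum_minus, rsum_const. unfold P. rewrite pw_sum by auto. field. auto. }
 assert (Hstep : forall t w, (w < n)%nat -> f (S t) w = mat_apply n P (f t) w).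
 { intros t w Hw. unfold f, mat_apply. simpl.
   rewrite (rsum_ext n (fun y => P w y * (pw n P u t y - / INR n)) (fun y => P y w * pw n P u t y - / INR n * P w y)).
   rewrite rsum_minus, rsum_scal_l. unfold P. rewrite P_row by auto. ring.
   intros. unfold P. rewrite (P_sym n d adj w i) by auto. ring. }
 assert (Hsq : forall t, sq n (f t) <= rho ^ t * rho ^ t).
 { induction t.
   - simpl. unfold sq. rewrite (rsum_ext n (fun i => f 0%nat i * f 0%nat i)
        (fun i => (if Nat.eqb i u then f 0%nat i else 0) - / INR n * f 0%nat i)).
     rewrite rsum_minus, rsum_scal_l, Hf0. rewrite (rsum_ind n u (f 0%nat)) by auto.
     unfold f. simpl. rewrite Nat.eqb_refl. assert (0 < / INR n) by (apply Rinv_0_lt_compat, lt_0_INR; lia). lra.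
     intros i Hi. unfold f at 1. simpl. destruct (Nat.eqb i u); ring.
   - rewrite (sq_ext n (f (S t)) (mat_apply n P (f t))) by (intros; apply Hstep; auto).
     assert (H := contraction n d adj rho Hn Hd Hreg Hsg Hrho (f t) (Hf0 t)).
     change (transGn n d adj) with P in H. simpl.
     assert (0 <= rho^2) by apply pow2_ge_0.
     apply Rle_trans with (rho^2 * sq n (f t)); auto.
     replace (rho * rho ^ t * (rho * rho ^ t)) with (rho ^ 2 * (rho ^ t * rho ^ t)) by ring.
     apply Rmult_le_compat_l; auto. }
 intros t w Hw. change (Rabs (f t w) <= rho ^ t).
 assert (H1 : f t w * f t w <= sq n (f t)).
 { apply (rsum_le_term n (fun i => f t i * f t i)); auto. intros. apply Rle_0_sqr. }
 assert (H2 := Hsq t). assert (Hr : 0 <= rho ^ t) by (apply pow_le; auto).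
 set (r := rho ^ t) in *. set (z := f t w) in *.
 apply Rabs_le. split.
 - destruct (Rle_dec (- r) z); auto. nra.
 - destruct (Rle_dec z r); auto. nra.
Qed.

Lemma exp_le : forall x y, x <= y -> exp x <= exp y.
Proof. intros x y [H|H]. left; apply exp_increasing; auto. subst; lra. Qed.

Definition phi (L p h : R) : R := if Rlt_dec 0 p then p * exp (- (L * h / p)) else 0.

Lemma phi_nonneg : forall L p h, 0 <= phi L p h.
Proof. intros. unfold phi. destruct (Rlt_dec 0 p). assert (0 < exp (- (L * h / p))) by apply exp_pos. nra. lra. Qed.

Lemma exp_tangent : forall z y, exp z * (1 + y - z) <= exp y.
Proof. intros. replace y with (z + (y - z)) at 2 by ring. rewrite exp_plus.
 assert (H := exp_ineq1_le (y - z)). assert (0 < exp z) by apply exp_pos. nra. Qed.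

Lemma phi_subadd : forall L p1 p2 h1 h2, 0 <= L -> 0 <= p1 -> 0 <= p2 -> 0 <= h1 -> 0 <= h2 ->
  phi L (p1 + p2) (h1 + h2) <= phi L p1 h1 + phi L p2 h2.
Proof. intros L p1 p2 h1 h2 HL Hp1 Hp2 Hh1 Hh2. unfold phi.
 destruct (Rlt_dec 0 p1) as [q1|q1]; destruct (Rlt_dec 0 p2) as [q2|q2]; destruct (Rlt_dec 0 (p1+p2)) as [q|q]; try lra.
 - set (z := - (L * (h1 + h2) / (p1 + p2))).
   assert (T1 := exp_tangent z (- (L * h1 / p1))). assert (T2 := exp_tangent z (- (L * h2 / p2))).
   assert (E : p1 * (1 + - (L * h1 / p1) - z) + p2 * (1 + - (L * h2 / p2) - z) = p1 + p2) by (unfold z; field; lra).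
   assert (A1 : p1 * (exp z * (1 + - (L * h1 / p1) - z)) <= p1 * exp (- (L * h1 / p1))) by (apply Rmult_le_compat_l; lra).
   assert (A2 : p2 * (exp z * (1 + - (L * h2 / p2) - z)) <= p2 * exp (- (L * h2 / p2))) by (apply Rmult_le_compat_l; lra).
   assert (p1 * (exp z * (1 + - (L * h1 / p1) - z)) + p2 * (exp z * (1 + - (L * h2 / p2) - z)) = (p1 + p2) * exp z).
   { rewrite <- E. ring. }
   lra.
 - assert (p2 = 0) by lra. subst p2. rewrite Rplus_0_r.
   assert (exp (- (L * (h1 + h2) / (p1 + 0))) <= exp (- (L * h1 / p1))).
   { apply exp_le. rewrite Rplus_0_r. apply Ropp_le_contravar. unfold Rdiv. apply Rmult_le_compat_r.
     left; apply Rinv_0_lt_compat; lra. nra. }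
   rewrite Rplus_0_r in H. assert (0 < exp (- (L * h2 / 0))) by apply exp_pos. nra.
 - assert (p1 = 0) by lra. subst p1. rewrite Rplus_0_l.
   assert (exp (- (L * (h1 + h2) / (0 + p2))) <= exp (- (L * h2 / p2))).
   { apply exp_le. rewrite Rplus_0_l. apply Ropp_le_contravar. unfold Rdiv. apply Rmult_le_compat_r.
     left; apply Rinv_0_lt_compat; lra. nra. }
   rewrite Rplus_0_l in H. nra.
Qed.

Lemma phi_scale : forall L c p h, 0 <= c -> phi L (c * p) (c * h) = c * phi L p h.
Proof. intros. unfold phi. destruct (Rlt_dec 0 (c * p)); destruct (Rlt_dec 0 p).
 - assert (c <> 0) by (intro; subst; lra). replace (L * (c * h) / (c * p)) with (L * h / p) by (field; lra). ring.
 - exfalso. assert (c <> 0) by (intro; subst; lra). nra.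
 - destruct (Req_dec c 0). subst. ring. exfalso. nra.
 - ring.
Qed.

Lemma phi_jensen : forall L k c p h, 0 <= L -> (forall i, (i < k)%nat -> 0 <= c i /\ 0 <= p i /\ 0 <= h i) ->
  phi L (rsum k (fun i => c i * p i)) (rsum k (fun i => c i * h i)) <= rsum k (fun i => c i * phi L (p i) (h i)).
Proof. induction k; intros c p h HL H; simpl.
 - unfold phi. destruct (Rlt_dec 0 0); lra.
 - destruct (H k ltac:(lia)) as [Hc [Hp Hh]].
   assert (IH := IHk c p h HL (fun i Hi => H i ltac:(lia))).
   assert (N1 : 0 <= rsum k (fun i => c i * p i)) by (apply rsum_nonneg; intros i Hi; destruct (H i ltac:(lia)) as [? [? ?]]; nra).
   assert (N2 : 0 <= rsum k (fun i => c i * h i)) by (apply rsum_nonneg; intros i Hi; destruct (H i ltac:(lia)) as [? [? ?]]; nra).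
   eapply Rle_trans. apply phi_subadd; auto; nra.
   rewrite phi_scale by auto. lra.
Qed.

Lemma phi_kill : forall L p h, 0 <= p -> exp (- L) * phi L p h = phi L p (h + p).
Proof. intros. unfold phi. destruct (Rlt_dec 0 p). 2: ring.
 replace (- (L * (h + p) / p)) with (- (L * h / p) + - L) by (field; lra). rewrite exp_plus. ring. Qed.

Fixpoint Hh (n : nat) (P : nat -> nat -> R) (v u t w : nat) : R :=
  match t with
  | O => 0
  | S s => rsum n (fun x => P x w * (Hh n P v u s x + if Nat.eqb x v then pw n P u s x else 0))
  end.

Lemma Hh_nonneg : forall n P v u t w, (forall x y, 0 <= P x y) -> 0 <= Hh n P v u t w.
Proof. induction t; intros; simpl. lra. apply rsum_nonneg. intros. apply Rmult_le_pos; auto.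
 assert (0 <= Hh n P v u t i) by auto. assert (0 <= pw n P u t i) by (apply pw_nonneg; auto).
 destruct (Nat.eqb i v); lra. Qed.

Lemma degG_eq : forall n d adj v x, is_d_regular_simple n d adj -> (x < n)%nat -> (v < n)%nat ->
  degG n adj v x = (d + if Nat.eqb x v then 1 else 0)%nat.
Proof. intros n d adj v x [_ [_ Hr]] Hx Hv. unfold degG. rewrite ncount_S.
 rewrite (ncount_ext n (adjG n adj v x) (adj x)). rewrite Hr by auto.
 f_equal. unfold adjG. replace (Nat.ltb n n) with false by (symmetry; apply Nat.ltb_irrefl).
 rewrite Nat.eqb_refl. replace (Nat.eqb x n) with false by (symmetry; apply Nat.eqb_neq; lia).
 destruct (Nat.eqb x v); simpl; rewrite ?Bool.andb_false_r; reflexivity.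
 intros i Hi. unfold adjG. replace (Nat.ltb x n) with true by (symmetry; apply Nat.ltb_lt; auto).
 replace (Nat.ltb i n) with true by (symmetry; apply Nat.ltb_lt; auto).
 replace (Nat.eqb i n) with false by (symmetry; apply Nat.eqb_neq; lia).
 replace (Nat.eqb x n) with false by (symmetry; apply Nat.eqb_neq; lia).
 simpl. rewrite !Bool.andb_false_r. rewrite !Bool.orb_false_r. reflexivity. Qed.

Lemma transG_eq : forall n d adj v x w, (0 < d)%nat -> is_d_regular_simple n d adj -> (x < n)%nat -> (w < n)%nat -> (v < n)%nat ->
  transG n adj v x w = (if Nat.eqb x v then INR d / INR (S d) else 1) * transGn n d adj x w.
Proof. intros. unfold transG, transGn.
 assert (E : adjG n adj v x w = adj x w).
 { unfold adjG. replace (Nat.ltb x n) with true by (symmetry; apply Nat.ltb_lt; auto).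
   replace (Nat.ltb w n) with true by (symmetry; apply Nat.ltb_lt; auto).
   replace (Nat.eqb w n) with false by (symmetry; apply Nat.eqb_neq; lia).
   replace (Nat.eqb x n) with false by (symmetry; apply Nat.eqb_neq; lia).
   simpl. rewrite !Bool.andb_false_r. rewrite !Bool.orb_false_r. reflexivity. }
 rewrite E. rewrite degG_eq with (d := d) by auto.
 assert (INR d <> 0) by (apply not_0_INR; lia).
 destruct (Nat.eqb x v); destruct (adj x w); try ring.
 - replace (d + 1)%nat with (S d) by lia. field. split; auto. apply not_0_INR; lia.
 - rewrite Nat.add_0_r. ring.
Qed.

Lemma kill_bound : forall n d adj v u, (0 < d)%nat -> is_d_regular_simple n d adj -> (v < n)%nat ->
  let L := - ln (INR d / INR (S d)) in
  forall t w, (w < n)%nat ->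
  phi L (pw n (transGn n d adj) u t w) (Hh n (transGn n d adj) v u t w) <= walk_avoid n adj v u t w.
Proof.
 intros n d adj v u Hd Hreg Hv L.
 assert (Hq0 : 0 < INR d / INR (S d)) by (apply Rdiv_lt_0_compat; apply lt_0_INR; lia).
 assert (Hq1 : INR d / INR (S d) <= 1).
 { rewrite S_INR. apply (Rmult_le_reg_r (INR d + 1)). assert (0 <= INR d) by apply pos_INR. lra.
   unfold Rdiv. rewrite Rmult_assoc, Rinv_l. assert (0 <= INR d) by apply pos_INR. lra.
   assert (0 <= INR d) by apply pos_INR. lra. }
 assert (HL : 0 <= L). { unfold L. rewrite <- Ropp_0. apply Ropp_le_contravar. rewrite <- ln_1.
   destruct (Req_dec (INR d / INR (S d)) 1) as [E|E]. rewrite E. lra. left. apply ln_increasing; lra. }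
 assert (HexpL : exp (- L) = INR d / INR (S d)) by (unfold L; rewrite Ropp_involutive; apply exp_ln; auto).
 set (P := transGn n d adj).
 assert (HP : forall x y, 0 <= P x y) by (intros; apply P_nonneg; auto).
 induction t; intros w Hw.
 - simpl. unfold phi. destruct (Nat.eqb w u); destruct (Rlt_dec 0 1); destruct (Rlt_dec 0 0); try lra.
   replace (- (L * 0 / 1)) with 0 by (field). rewrite exp_0. lra.
 - simpl. eapply Rle_trans. apply phi_jensen; auto.
   intros i Hi. split; [auto| split]. apply pw_nonneg; auto.
   assert (0 <= Hh n P v u t i) by (apply Hh_nonneg; auto). assert (0 <= pw n P u t i) by (apply pw_nonneg; auto).
   destruct (Nat.eqb i v); lra.
   apply rsum_le. intros x Hx. rewrite transG_eq with (d := d) by auto. fold P.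
   assert (IH := IHt x Hx). fold P in IH.
   assert (Hpx := HP x w).
   destruct (Nat.eqb_spec x v).
   + rewrite <- phi_kill by (apply pw_nonneg; auto). rewrite HexpL.
     assert (0 <= INR d / INR (S d) * phi L (pw n P u t x) (Hh n P v u t x)) by (apply Rmult_le_pos; [lra| apply phi_nonneg]).
     assert (INR d / INR (S d) * phi L (pw n P u t x) (Hh n P v u t x) <= INR d / INR (S d) * walk_avoid n adj v u t x)
       by (apply Rmult_le_compat_l; lra).
     nra.
   + rewrite Rplus_0_r. nra.
Qed.

Lemma Rabs_le_inv : forall x a, Rabs x <= a -> -a <= x <= a.
Proof. intros. unfold Rabs in H. destruct (Rcase_abs x); lra. Qed.

Lemma Hh_closed : forall n P v u, (v < n)%nat -> forall t w,
  Hh n P v u t w = rsum t (fun s => pw n P u s v * pw n P v (t - s) w).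
Proof. intros n P v u Hv. induction t; intros w. simpl. reflexivity.
 cbn [Hh]. rewrite (rsum_ext n _ (fun x => P x w * Hh n P v u t x + (if Nat.eqb x v then P x w * pw n P u t x else 0))).
 rewrite rsum_plus. rewrite (rsum_ind n v (fun x => P x w * pw n P u t x)) by auto.
 cbn [rsum]. replace (S t - t)%nat with 1%nat by lia.
 replace (pw n P v 1 w) with (P v w).
 2: { simpl. rewrite (rsum_ext n _ (fun x => if Nat.eqb x v then P x w else 0)).
      rewrite (rsum_ind n v (fun x => P x w)); auto. intros. destruct (Nat.eqb i v); ring. }
 f_equal. 2: ring.
 rewrite (rsum_ext n _ (fun x => rsum t (fun s => pw n P u s v * (P x w * pw n P v (t - s) x)))).
 rewrite rsum_swap. apply rsum_ext. intros s Hs. rewrite rsum_scal_l. f_equal.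
 replace (S t - s)%nat with (S (t - s)) by lia. reflexivity.
 intros x Hx. rewrite IHt. rewrite <- rsum_scal_l. apply rsum_ext. intros. ring.
 intros x Hx. destruct (Nat.eqb x v); ring.
Qed.

Lemma geo1 : forall r t, rsum t (fun s => r ^ s) * (1 - r) = 1 - r ^ t.
Proof. induction t; simpl. ring. rewrite Rmult_plus_distr_r, IHt. ring. Qed.

Lemma geo2 : forall r t, rsum t (fun s => r ^ (t - s)) * (1 - r) = r - r ^ (S t).
Proof. induction t. simpl. ring.
 cbn [rsum]. replace (S t - t)%nat with 1%nat by lia.
 rewrite (rsum_ext t (fun s => r ^ (S t - s)) (fun s => r * r ^ (t - s))).
 rewrite rsum_scal_l. replace (r * rsum t (fun s => r ^ (t - s)) + r ^ 1) with (r * (rsum t (fun s => r ^ (t - s)) + 1)) by ring.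
 rewrite Rmult_assoc, Rmult_plus_distr_r, IHt. simpl. ring.
 intros s Hs. replace (S t - s)%nat with (S (t - s)) by lia. reflexivity. Qed.

Lemma Hh_bound : forall n d adj rho v u t w, (1 <= n)%nat -> (0 < d)%nat -> is_d_regular_simple n d adj ->
  spectral_gap n d adj rho -> 0 <= rho -> rho < 1 -> (v < n)%nat -> (u < n)%nat -> (w < n)%nat ->
  rsum t (fun s => pw n (transGn n d adj) u s v * pw n (transGn n d adj) v (t - s) w)
  <= INR t * (/ INR n * / INR n) + 2 * / INR n * / (1 - rho) + INR t * rho ^ t.
Proof. intros n d adj rho v u t w Hn Hd Hreg Hsg H0 H1 Hv Hu Hw.
 set (a := / INR n).
 apply Rle_trans with (rsum t (fun s => (a + rho ^ s) * (a + rho ^ (t - s)))).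
 - apply rsum_le. intros s Hs.
   assert (M1 := mixing n d adj rho u Hn Hd Hreg Hsg H0 Hu s v Hv).
   assert (M2 := mixing n d adj rho v Hn Hd Hreg Hsg H0 Hv (t - s) w Hw).
   apply Rabs_le_inv in M1. apply Rabs_le_inv in M2.
   assert (0 <= pw n (transGn n d adj) u s v) by (apply pw_nonneg; intros; apply P_nonneg; auto).
   assert (0 <= pw n (transGn n d adj) v (t - s) w) by (apply pw_nonneg; intros; apply P_nonneg; auto).
   apply Rmult_le_compat; auto; unfold a; lra.
 - rewrite (rsum_ext t _ (fun s => a * a + a * rho ^ s + a * rho ^ (t - s) + rho ^ t)).
   rewrite !rsum_plus, !rsum_scal_l, !rsum_const.
   assert (G1 := geo1 rho t). assert (G2 := geo2 rho t).
   assert (Ha : 0 <= a) by (unfold a; left; apply Rinv_0_lt_compat, lt_0_INR; lia).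
   assert (Hp1 : 0 <= rho ^ t) by (apply pow_le; auto).
   assert (Hp2 : 0 <= rho ^ S t) by (apply pow_le; auto).
   assert (E1 : rsum t (fun s => rho ^ s) <= / (1 - rho)).
   { apply (Rmult_le_reg_r (1 - rho)). lra. rewrite G1. rewrite Rinv_l by lra. lra. }
   assert (E2 : rsum t (fun s => rho ^ (t - s)) <= / (1 - rho)).
   { apply (Rmult_le_reg_r (1 - rho)). lra. rewrite G2. rewrite Rinv_l by lra. lra. }
   assert (a * rsum t (fun s => rho ^ s) <= a * / (1 - rho)) by (apply Rmult_le_compat_l; auto).
   assert (a * rsum t (fun s => rho ^ (t - s)) <= a * / (1 - rho)) by (apply Rmult_le_compat_l; auto).
   change (rsum t (pow rho)) with (rsum t (fun s => rho ^ s)).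
   replace (a * (INR t * a)) with (INR t * (a * a)) by ring. lra.
   intros s Hs. replace (rho ^ t) with (rho ^ s * rho ^ (t - s)). ring.
   rewrite <- pow_add. f_equal. lia.
Qed.

Lemma sg_mono : forall n d adj r1 r2, r1 <= r2 -> spectral_gap n d adj r1 -> spectral_gap n d adj r2.
Proof. intros n d adj r1 r2 Hr [H1 H2]. split; auto. intros. assert (Rabs lam <= r1) by (eapply H2; eauto). lra. Qed.

Lemma ncount_lt : forall n, ncount (S n) (fun w => Nat.ltb w n) = n.
Proof. intros. rewrite ncount_S. rewrite Nat.ltb_irrefl. rewrite (ncount_ext n _ (fun _ => true)).
 rewrite ncount_true. lia. intros. apply Nat.ltb_lt. auto. Qed.

Theorem lemma3p2 :
  forall (d : nat) (rho : R), (3 <= d)%nat -> rho < 1 ->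
  exists (C c : R) (eps : nat -> R),
    0 < C /\ 0 < c /\ Un_cv eps 0 /\
    exists N : nat, forall n : nat, (N <= n)%nat ->
    forall adj : nat -> nat -> bool,
      is_d_regular_simple n d adj ->
      spectral_gap n d adj rho ->
      forall v : nat, (v < n)%nat ->
      forall u : nat, (u <= n)%nat -> u <> n ->
      exists Su : nat -> bool,
        INR (ncount (S n) Su) >= (1 - eps n) * INR n /\
        forall w : nat, (w <= n)%nat -> Su w = true ->
        forall t : nat, C * ln (INR n) <= INR t -> (t <= n)%nat ->
          walk_avoid n adj v u t w >= c / INR n.
Proof.
 intros d rho Hd Hrho.
 set (r := Rmax rho (1/2)).
 assert (Hr1 : r < 1) by (unfold r; apply Rmax_lub_lt; lra).
 assert (Hr0 : 1/2 <= r) by apply Rmax_r.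
 assert (Hrr : rho <= r) by apply Rmax_l.
 assert (Hlnr : ln r < 0) by (rewrite <- ln_1; apply ln_increasing; lra).
 set (L := - ln (INR d / INR (S d))).
 set (B := 2 + 2 / (1 - r)).
 exists (2 / (- ln r)), (exp (- (2 * L * B)) / 2), (fun _ => 0).
 split. apply Rdiv_lt_0_compat; lra.
 split. apply Rdiv_lt_0_compat. apply exp_pos. lra.
 split. intros e He. exists 0%nat. intros. unfold R_dist. rewrite Rminus_0_r, Rabs_R0. auto.
 exists 2%nat. intros n Hn adj Hreg Hsg v Hv u Hu Hun.
 assert (Hu' : (u < n)%nat) by lia.
 assert (Hd0 : (0 < d)%nat) by lia.
 assert (Hsg' : spectral_gap n d adj r) by (eapply sg_mono; eauto).
 exists (fun w => Nat.ltb w n). split.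
 { rewrite ncount_lt. lra. }
 intros w Hw Hsw t Ht Htn. apply Nat.ltb_lt in Hsw.
 assert (HnR : 2 <= INR n) by (replace 2 with (INR 2) by (simpl; ring); apply le_INR; auto).
 assert (Hn1 : (1 <= n)%nat) by lia.
 set (a := / INR n).
 assert (Ha : 0 < a) by (unfold a; apply Rinv_0_lt_compat; lra).
 assert (Han : a * INR n = 1) by (unfold a; field; lra).
 assert (Hrt : r ^ t <= a * a).
 { rewrite <- Rpower_pow by lra. unfold Rpower.
   assert (Hlnn : 0 < ln (INR n)) by (rewrite <- ln_1; apply ln_increasing; lra).
   assert (HC : 2 / (- ln r) * ln (INR n) * ln r = - (2 * ln (INR n))) by (field; lra).
   assert (INR t * ln r <= - (2 * ln (INR n))).
   { rewrite <- HC. assert (0 <= INR t - 2 / (- ln r) * ln (INR n)) by lra.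
     assert ((INR t - 2 / (- ln r) * ln (INR n)) * ln r <= 0) by nra. nra. }
   apply Rle_trans with (exp (- (2 * ln (INR n)))). apply exp_le; auto.
   replace (- (2 * ln (INR n))) with (- ln (INR n) + - ln (INR n)) by ring.
   rewrite exp_plus, exp_Ropp, exp_ln by lra. unfold a. lra. }
 assert (HP : forall x y, 0 <= transGn n d adj x y) by (intros; apply P_nonneg; auto).
 assert (Hr0' : 0 <= r) by lra.
 assert (Mx := mixing n d adj r u Hn1 Hd0 Hreg Hsg' Hr0' Hu' t w Hsw).
 apply Rabs_le_inv in Mx. fold a in Mx.
 set (p := pw n (transGn n d adj) u t w) in *.
 assert (Ha2 : a * a <= a / 2).
 { assert (a <= 1/2). { unfold a. replace (1/2) with (/2) by field. apply Rinv_le_contravar; lra. }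
   nra. }
 assert (Hp : a / 2 <= p) by lra.
 set (H := Hh n (transGn n d adj) v u t w).
 assert (HH0 : 0 <= H) by (apply Hh_nonneg; auto).
 assert (HHB : H <= B * a).
 { unfold H. rewrite Hh_closed by auto.
   eapply Rle_trans. apply (Hh_bound n d adj r v u t w); auto.
   assert (Htn' : INR t <= INR n) by (apply le_INR; auto).
   assert (Ht0 : 0 <= INR t) by apply pos_INR.
   assert (INR t * (a * a) <= a).
   { apply Rle_trans with (INR n * (a*a)). apply Rmult_le_compat_r; nra.
     replace (INR n * (a*a)) with (a * (a * INR n)) by ring. rewrite Han; lra. }
   assert (INR t * r ^ t <= a).
   { apply Rle_trans with (INR t * (a * a)); auto. apply Rmult_le_compat_l; auto. }
   unfold B. unfold Rdiv. fold a. lra. }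
 assert (KB := kill_bound n d adj v u Hd0 Hreg Hv t w Hsw). cbv zeta in KB. fold L p H in KB.
 apply Rle_ge. eapply Rle_trans; [|apply KB].
 assert (HL : 0 <= L).
 { unfold L. assert (Hq0 : 0 < INR d / INR (S d)) by (apply Rdiv_lt_0_compat; apply lt_0_INR; lia).
   assert (Hq1 : INR d / INR (S d) < 1).
   { rewrite S_INR. apply (Rmult_lt_reg_r (INR d + 1)). assert (0 <= INR d) by apply pos_INR. lra.
     unfold Rdiv. rewrite Rmult_assoc, Rinv_l. assert (0 <= INR d) by apply pos_INR. lra.
     assert (0 <= INR d) by apply pos_INR. lra. }
   assert (ln (INR d / INR (S d)) < 0) by (rewrite <- ln_1; apply ln_increasing; lra). lra. }
 unfold phi. destruct (Rlt_dec 0 p) as [Hp0|Hp0]; [|lra].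
 assert (Hinvp : a * / p <= 2).
 { apply (Rmult_le_reg_r p). lra. rewrite Rmult_assoc, Rinv_l by lra. lra. }
 assert (HLH : L * H / p <= 2 * L * B).
 { unfold Rdiv. assert (0 < / p) by (apply Rinv_0_lt_compat; lra).
   assert (H * / p <= B * a * / p) by (apply Rmult_le_compat_r; lra).
   assert (HB0 : 0 <= B) by (unfold B; unfold Rdiv; assert (0 < / (1 - r)) by (apply Rinv_0_lt_compat; lra); lra).
   assert (B * a * / p <= B * 2) by (rewrite Rmult_assoc; apply Rmult_le_compat_l; auto).
   assert (L * (H * / p) <= L * (B * 2)) by (apply Rmult_le_compat_l; lra).
   replace (L * H * / p) with (L * (H * / p)) by ring. lra. }
 assert (HE : exp (- (2 * L * B)) <= exp (- (L * H / p))) by (apply exp_le; lra).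
 assert (0 < exp (- (2 * L * B))) by apply exp_pos.
 replace (exp (- (2 * L * B)) / 2 / INR n) with (a / 2 * exp (- (2 * L * B))) by (unfold a; field; lra).
 apply Rmult_le_compat; lra.
Qed.
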